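(* There exists an infinite class of feasible configurations with span $\sigma=1$ such that, for each configuration $G$ of this class, every dedicated leader election algorithm for $G$ takes time $\Omega(n)$, where $n$ is the size (number of nodes) of $G$.
   Context: Model. A configuration is a finite simple undirected connected graph $G$ in which each node $v$ is tagged with a non-negative integer $t_v$ (wakeup tag); smallest tag $0$, span $\sigma$ = largest tag; its size is its number of nodes $n$. Nodes are anonymous and communicate in synchronous global rounds. A node $v$ wakes up in the first global round $r\le t_v$ in which it receives a message, if any, and otherwise in global round $t_v$; its local clock is $0$ in its wakeup round, it acts from local round $1$, and nodes do not know the global clock. In each round a node transmits a message to all neighbours, listens, or terminates. A listening node receives $M$ if exactly one neighbour transmits ($M$), hears collision noise (distinct from silence and messages) if at least two neighbours transmit, and silence otherwise; a transmitting node hears nothing. A DRIP is a common function mapping a node's history (what it heard in each local round $0,\ldots,i-1$, including whether/by which message it was woken) to its action in local round $i\ge1$, with every node eventually terminating permanently; a decision function maps each node's final history to $\{0,1\}$; a dedicated leader election algorithm for $G$ is a DRIP plus decision function such that exactly one node of $G$ outputs $1$; $G$ is feasible if one exists. The time of such an algorithm is the number of rounds until the nodes terminate. *)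

(* Defs.v *)
From mathcomp Require Import all_boot.
Set Implicit Arguments. Unset Strict Implicit. Unset Printing Implicit Defensive.

Record config := Config {
  csize : nat;
  cadj : rel 'I_csize;
  cadj_sym : symmetric cadj;
  cadj_irr : irreflexive cadj;
  cconn : forall u v : 'I_csize, connect cadj u v;
  ctag : 'I_csize -> nat;
  ctag0 : exists v, ctag v = 0 }.

Definition span (G : config) : nat := \max_(v : 'I_(csize G)) ctag v.

(* Messages are natural numbers (encodings of finite strings). *)
Inductive hear := Silence | Noise | Msg of nat.
Definition history := seq hear.
Inductive action := Transmit of nat | Listen | Terminate.

(* A DRIP: common function from history (local rounds 0..i-1) to the action
   in local round i >= 1. *)
Definition drip := history -> action.
Definition decision := history -> bool.

Inductive nstate := Asleep | Active of history | Halted of history.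

Section Exec.
Variables (G : config) (A : drip).
Local Notation V := ('I_(csize G)).

Definition transmits (s : V -> nstate) (u : V) : option nat :=
  if s u is Active h then (if A h is Transmit m then Some m else None) else None.

Definition heard (s : V -> nstate) (v : V) : hear :=
  match pmap (fun u => if cadj v u then transmits s u else None) (enum V) with
  | [::] => Silence
  | [:: m] => Msg m
  | _ => Noise
  end.

Definition step (r : nat) (s : V -> nstate) (v : V) : nstate :=
  match s v with
  | Halted h => Halted h
  | Active h =>
      match A h with
      | Transmit _ => Active (rcons h Silence)
      | Listen => Active (rcons h (heard s v))
      | Terminate => Halted h
      end
  | Asleep =>
      match heard s v with
      | Msg m => if r <= ctag v then Active [:: Msg m]
                 else Asleep (* unreachable: v is awake after round ctag v *)
      | _ => if r == ctag v then Active [:: Silence] (* spontaneous wakeup *)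
             else Asleep
      end
  end.

(* state R = states of all nodes before global round R (after rounds 0..R-1) *)
Fixpoint state (R : nat) : V -> nstate :=
  match R with
  | 0 => fun _ => Asleep
  | R'.+1 => step R' (state R')
  end.

Definition all_halted (R : nat) : Prop :=
  forall v, if state R v is Halted _ then True else False.

Definition hist_of (x : nstate) : history :=
  match x with Asleep => [::] | Active h => h | Halted h => h end.
End Exec.
Arguments state : clear implicits.
Arguments all_halted : clear implicits.
Arguments step : clear implicits.

Definition elects (G : config) (A : drip) (d : decision) : Prop :=
  exists R, all_halted G A R /\
    #|[set v : 'I_(csize G) | d (hist_of (state G A R v))]| = 1.

Definition feasible (G : config) : Prop := exists A d, elects G A d.

(* Main.v *)
Require Import Defs.
From mathcomp Require Import all_boot zify.
Set Implicit Arguments. Unset Strict Implicit. Unset Printing Implicit Defensive.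

Section Gen.
Variables (T : eqType) (R : Type) (f : T -> option R).

Lemma pmap_none (s : seq T) : (forall x, x \in s -> f x = None) -> pmap f s = [::].
Proof.
elim: s => //= x s IH H; rewrite H ?mem_head // IH // => y Hy; apply: H; by rewrite inE Hy orbT.
Qed.

Lemma pmap_one (s : seq T) u m : uniq s -> u \in s -> f u = Some m ->
  (forall w, w \in s -> w != u -> f w = None) -> pmap f s = [:: m].
Proof.
elim: s => //= x s IH /andP[xs us] uin fu H.
case: (eqVneq x u) => [exu|nxu].
  subst x; rewrite fu /= pmap_none // => y ys; apply: H; first by rewrite inE ys orbT.
  by apply/eqP => E; subst y; rewrite ys in xs.
rewrite H ?mem_head //=; apply: IH => //.
  by move: uin; rewrite inE eq_sym (negbTE nxu).
by move=> w ws; apply: H; rewrite inE ws orbT.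
Qed.

Lemma count_two (p : pred T) (s : seq T) u1 u2 : u1 \in s -> u2 \in s -> u1 != u2 ->
  p u1 -> p u2 -> 1 < count p s.
Proof.
elim: s => //= x s IH; rewrite !inE => H1 H2 ne p1 p2.
case: (eqVneq x u1) => [e1|n1].
  subst x; rewrite p1; have : u2 \in s by move: H2; rewrite eq_sym (negbTE ne).
  move=> h; have : has p s by apply/hasP; exists u2.
  by rewrite has_count; case: (count p s).
case: (eqVneq x u2) => [e2|n2].
  subst x; rewrite p2; have : u1 \in s by move: H1; rewrite eq_sym (negbTE n1).
  move=> h; have : has p s by apply/hasP; exists u1.
  by rewrite has_count; case: (count p s).
have := IH; rewrite eq_sym (negbTE n1) eq_sym (negbTE n2) /= in H1 H2.
move=> /(_ H1 H2 ne p1 p2) h; lia.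
Qed.
End Gen.

Section Heard.
Variables (G : config) (A : drip) (s : 'I_(csize G) -> nstate) (v : 'I_(csize G)).

Lemma heard_none : (forall u, cadj v u -> transmits A s u = None) -> heard A s v = Silence.
Proof.
move=> H; rewrite /heard pmap_none // => u _; by case: ifP => // /H.
Qed.

Lemma heard_one u m : cadj v u -> transmits A s u = Some m ->
  (forall w, cadj v w -> w != u -> transmits A s w = None) -> heard A s v = Msg m.
Proof.
move=> a t H; rewrite /heard (@pmap_one _ _ _ _ u m) ?enum_uniq ?mem_enum //.
  by rewrite a.
by move=> w _ ne; case: ifP => // aw; apply: H.
Qed.

Lemma heard_two u1 u2 m1 m2 : cadj v u1 -> cadj v u2 -> u1 != u2 ->
  transmits A s u1 = Some m1 -> transmits A s u2 = Some m2 -> heard A s v = Noise.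
Proof.
move=> a1 a2 ne t1 t2; rewrite /heard.
set f := fun u => if cadj v u then transmits A s u else None.
have : 1 < size (pmap f (enum 'I_(csize G))).
  rewrite size_pmap; apply: (count_two (u1:=u1) (u2:=u2)); rewrite ?mem_enum //.
  by rewrite /f a1 t1. by rewrite /f a2 t2.
by case: (pmap _ _) => [|a [|b l]].
Qed.
End Heard.

Definition ocomb (a b : option nat) : hear :=
  match a, b with
  | None, None => Silence
  | Some x, None => Msg x
  | None, Some x => Msg x
  | Some _, Some _ => Noise
  end.

Lemma ocombC a b : ocomb a b = ocomb b a.
Proof. by case: a; case: b. Qed.

Notation Mid m := (m.+1).
Notation Nn m := ((Mid m + Mid m).+1).
Section Path.
Variable m : nat.

Definition padj : rel 'I_(Nn m) := fun u v => (u.+1 == v :> nat) || (v.+1 == u :> nat).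
Lemma padj_sym : symmetric padj.
Proof. by move=> u v; rewrite /padj orbC. Qed.
Lemma padj_irr : irreflexive padj.
Proof. move=> u; rewrite /padj; apply/negP; lia. Qed.

Lemma padj_conn : forall u v : 'I_(Nn m), connect padj u v.
Proof.
have H0 : forall v : 'I_(Nn m), connect padj ord0 v.
  case=> k; elim: k => [|k IH] Hk.
    by have -> : Ordinal Hk = ord0 by apply: val_inj.
  apply: (connect_trans (IH (ltnW Hk))); apply: connect1; rewrite /padj /=; lia.
move=> u v; apply: (connect_trans _ (H0 v)).
by rewrite (sym_connect_sym padj_sym).
Qed.

Definition ptag (v : 'I_(Nn m)) : nat := (v == 0 :> nat) || (v == (Mid m + Mid m) :> nat).
Lemma ptag0 : exists v, ptag v = 0.
Proof.
have H : 1 < Nn m by  lia.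
exists (Ordinal H); rewrite /ptag /=;  lia.
Qed.

Definition pathcfg : config := Config padj_sym padj_irr padj_conn ptag0.
End Path.

Definition prevo m (v : 'I_(Nn m)) : 'I_(Nn m) := inord v.-1.
Definition nexto m (v : 'I_(Nn m)) : 'I_(Nn m) := inord v.+1.

Lemma prevoE m (v : 'I_(Nn m)) : prevo v = v.-1 :> nat.
Proof. rewrite /prevo inordK //; have := ltn_ord v;  lia. Qed.
Lemma nextoE m (v : 'I_(Nn m)) : v < (Mid m + Mid m) -> nexto v = v.+1 :> nat.
Proof. move=> h; rewrite /nexto inordK //;  lia. Qed.

Lemma heard_path m (A : drip) (s : 'I_(Nn m) -> nstate) (v : 'I_(Nn m)) :
  heard (G := pathcfg m) A s v =
  ocomb (if 0 < v then transmits (G := pathcfg m) A s (prevo v) else None)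
        (if v < (Mid m + Mid m) then transmits (G := pathcfg m) A s (nexto v) else None).
Proof.
have hv := ltn_ord v; 
have adjE : forall u : 'I_(Nn m), cadj (c := pathcfg m) v u ->
   (0 < v /\ u = prevo v) \/ (v < (Mid m + Mid m) /\ u = nexto v).
  move=> u; rewrite /= /padj => /orP[]/eqP e.
    right; have h : v < (Mid m + Mid m).
      have := ltn_ord u; rewrite -e. lia.
    by split => //; apply: val_inj; rewrite /= nextoE.
  by left; split; [lia | apply: val_inj; rewrite /= prevoE -e].
have ap : 0 < v -> cadj (c := pathcfg m) v (prevo v).
  by move=> h; rewrite /= /padj prevoE; apply/orP; right; apply/eqP; lia.
have an : v < (Mid m + Mid m) -> cadj (c := pathcfg m) v (nexto v).
  by move=> h; rewrite /= /padj nextoE //; apply/orP; left.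
have ne : 0 < v -> v < (Mid m + Mid m) -> prevo v != nexto v.
  by move=> h1 h2; apply/eqP => /(congr1 (@nat_of_ord _)); rewrite prevoE nextoE //; lia.
case: (ltnP 0 v) => h1; case: (ltnP v (Mid m + Mid m)) => h2.
- case Ep: (transmits (G:=pathcfg m) A s (prevo v)) => [a|]; case En: (transmits (G:=pathcfg m) A s (nexto v)) => [b|] /=.
  + exact: (heard_two (ap h1) (an h2) (ne h1 h2) Ep En).
  + apply: (heard_one (ap h1) Ep) => w /adjE [][_ ->] //; by rewrite eqxx.
  + apply: (heard_one (an h2) En) => w /adjE [][_ ->] //; by rewrite eqxx.
  + by apply: heard_none => w /adjE [][_ ->].
- case Ep: (transmits (G:=pathcfg m) A s (prevo v)) => [a|] /=.
  + apply: (heard_one (ap h1) Ep) => w /adjE [][] h ->; [by rewrite eqxx | lia].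
  + by apply: heard_none => w /adjE [][] h ->; [|lia].
- case En: (transmits (G:=pathcfg m) A s (nexto v)) => [b|] /=.
  + apply: (heard_one (an h2) En) => w /adjE [][] h ->; [lia | by rewrite eqxx].
  + by apply: heard_none => w /adjE [][] h ->; [lia|].
- lia.
Qed.
Lemma step_congr G A r s (i j : 'I_(csize G)) : s i = s j ->
  heard A s i = heard A s j -> ctag i = ctag j -> step G A r s i = step G A r s j.
Proof. by rewrite /step => -> -> ->. Qed.

Definition E m c (i j : nat) :=
  (minn i c = minn j c /\ minn (Mid m + Mid m - i) c = minn (Mid m + Mid m - j) c) \/
  (minn i c = minn (Mid m + Mid m - j) c /\ minn (Mid m + Mid m - i) c = minn j c).

Lemma mm1 a b c : minn a c.+1 = minn b c.+1 -> minn a c = minn b c.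
Proof. lia. Qed.
Lemma mprev a b c : 0 < a -> 0 < b -> minn a c.+2 = minn b c.+2 -> minn a.-1 c.+1 = minn b.-1 c.+1.
Proof. lia. Qed.
Lemma msucc a b c : minn a c.+2 = minn b c.+2 -> minn a.+1 c.+1 = minn b.+1 c.+1.
Proof. lia. Qed.
Lemma mzero a b c : minn a c.+1 = minn b c.+1 -> (0 < a) = (0 < b).
Proof. move=> h; apply/idP/idP; lia. Qed.
Lemma mzeq a b c : minn a c.+1 = minn b c.+1 -> (a == 0) = (b == 0).
Proof. move=> h; apply/idP/idP; lia. Qed.
Lemma subprev L i : 0 < i -> i <= L -> L - i.-1 = (L - i).+1.
Proof. lia. Qed.
Lemma subnext L i : i < L -> L - i.+1 = (L - i).-1.
Proof. lia. Qed.
Lemma ltsub L i : i <= L -> (i < L) = (0 < L - i).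
Proof. lia. Qed.
Lemma eqsub L i : i <= L -> (i == L) = (L - i == 0).
Proof. lia. Qed.

Lemma E_mono m c i j : E m c.+1 i j -> E m c i j.
Proof. by case=> [[h1 h2]|[h1 h2]]; [left|right]; split; apply: mm1. Qed.

Lemma lb_inv m A r : forall i j : 'I_(Nn m), E m r.+1 i j ->
  state (pathcfg m) A r i = state (pathcfg m) A r j.
Proof.
elim: r => [//|r IH] i j HE.
have hi : i <= Mid m + Mid m by have := ltn_ord i; lia.
have hj : j <= Mid m + Mid m by have := ltn_ord j; lia.
change (step (pathcfg m) A r (state (pathcfg m) A r) i = step (pathcfg m) A r (state (pathcfg m) A r) j).
apply: step_congr.
- by apply: IH; apply: E_mono.
- rewrite !heard_path; case: HE => [[Ha Hb]|[Ha Hb]].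
  + have h0 : (0 < i) = (0 < j) by apply: mzero Ha.
    have h1 : (i < Mid m + Mid m) = (j < Mid m + Mid m).
      by rewrite (ltsub hi) (ltsub hj); apply: mzero Hb.
    rewrite -h0 -h1; congr ocomb.
      case: ifP => // hp; rewrite /transmits (IH _ (prevo j)) //.
      have hq : 0 < j by rewrite -h0.
      rewrite /E !prevoE; left; split; first by apply: mprev.
      by rewrite !subprev //; apply: msucc.
    case: ifP => // hp; rewrite /transmits (IH _ (nexto j)) //.
    have hq : j < Mid m + Mid m by rewrite -h1.
    rewrite /E !nextoE //; left; split; first by apply: msucc.
    rewrite !subnext //; apply: mprev => //; by rewrite -ltsub.
  + have h0 : (0 < i) = (j < Mid m + Mid m) by rewrite (ltsub hj); apply: mzero Ha.
    have h1 : (i < Mid m + Mid m) = (0 < j) by rewrite (ltsub hi); apply: mzero Hb.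
    rewrite ocombC -h0 -h1; congr ocomb.
      case: ifP => // hp; rewrite /transmits (IH _ (prevo j)) //.
      have hq : 0 < j by rewrite -h1.
      rewrite /E prevoE nextoE //; right; split.
        by rewrite subprev //; apply: msucc.
      rewrite subnext //; apply: mprev => //; by rewrite -ltsub.
    case: ifP => // hp; rewrite /transmits (IH _ (nexto j)) //.
    have hq : j < Mid m + Mid m by rewrite -h0.
    rewrite /E prevoE nextoE //; right; split.
      rewrite subnext //; apply: mprev => //; by rewrite -ltsub.
    by rewrite subprev //; apply: msucc.
- rewrite /= /ptag; case: HE => [[Ha Hb]|[Ha Hb]].
  + by rewrite (eqsub hi) (eqsub hj) (mzeq Ha) (mzeq Hb).
  + by rewrite (eqsub hi) (eqsub hj) (mzeq Ha) (mzeq Hb) orbC.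
Qed.

Lemma halted_stable G A R : all_halted G A R -> forall k v, state G A (R + k) v = state G A R v.
Proof.
move=> H k v; elim: k => [|k IH]; first by rewrite addn0.
rewrite addnS /= /step IH; have := H v; by case: (state G A R v).
Qed.

Lemma lower_bound m (A : drip) (d : decision) : elects (pathcfg m) A d ->
  forall R, all_halted (pathcfg m) A R -> Nn m <= 5 * R.
Proof.
move=> [R0 [H0 Hc]] R HR.
have R1 : 0 < R.
  case: R HR => // HR; have := HR ord0; by [].
have Eq : forall v, state (pathcfg m) A R0 v = state (pathcfg m) A R v.
  move=> v; case: (leqP R R0) => h.
    by rewrite -(subnKC h) halted_stable.
  by rewrite -(subnKC (ltnW h)) halted_stable.
rewrite leqNgt; apply/negP => big.
have := Hc; set S := [set v | _].
have : S = [set v | d (hist_of (state (pathcfg m) A R v))].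
  by apply/setP => v; rewrite !inE Eq.
move=> -> /eqP/cards1P [v Sv].
move: v Sv => /= v Sv.
have vin : v \in [set v | d (hist_of (state (pathcfg m) A R v))] by rewrite Sv inE.
have hv : (v : nat) < Nn m := ltn_ord v.
have [w [wne Ew]] : exists w : 'I_(Nn m), w != v /\ E m R.+1 w v.
  case: (boolP ((R < v) && (v < Mid m + Mid m - R))) => /andP.
    case=> a b.
    case: (ltnP v.+1 (Mid m + Mid m - R)) => c.
      exists (inord v.+1); split.
        by apply/eqP => /(congr1 (@nat_of_ord _)); rewrite inordK; lia.
      by rewrite /E inordK; [left; split; lia | lia].
    exists (inord v.-1); split.
      by apply/eqP => /(congr1 (@nat_of_ord _)); rewrite inordK; lia.
    by rewrite /E inordK; [left; split; lia | lia].
  move=> nb; exists (inord (Mid m + Mid m - v)); split.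
    apply/eqP => /(congr1 (@nat_of_ord _)); rewrite inordK; last by lia.
    move=> e; apply: nb; split; lia.
  rewrite /E inordK; last by lia.
  right; rewrite subKn //; lia.
have win : w \in [set v | d (hist_of (state (pathcfg m) A R v))].
  by move: vin; rewrite !inE (lb_inv A Ew).
by move: win; rewrite Sv inE (negbTE wne).
Qed.

Section Sim.
Variable m : nat.
Local Notation M := (Mid m).
Local Notation L := (Mid m + Mid m).

Definition dd i := minn i (L - i).
Definition tx d r : bool := ((0 < d) && (r == 1)) || ((d < M) && (r == d.+2)).
Definition txr i r := tx (dd i) r.
Definition wk i : nat := (dd i == 0).
Definition nbt i r : nat := ((0 < i) && txr i.-1 r) + ((i < L) && txr i.+1 r).
Definition hcount k := if k == 0 then Silence else if k == 1 then Msg 0 else Noise.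
Definition hg i r := if txr i r then Silence else hcount (nbt i r).
Definition TT := L + 4.
Definition hist i c := mkseq (fun k => hg i (k + wk i)) c.
Definition cs i r := if r <= wk i then Asleep
  else if r - wk i <= TT then Active (hist i (r - wk i)) else Halted (hist i TT).
Definition isMsg (x : hear) := if x is Msg _ then true else false.
Definition isNoise (x : hear) := if x is Noise then true else false.
Definition Ad : drip := fun h =>
  let c := size h in
  if TT <= c then Terminate
  else if (c == 1) || (isMsg (nth Silence h c.-1) && ~~ has isMsg (take c.-1 h))
  then Transmit 0 else Listen.
Definition dec : decision := fun h => has isNoise h.

Lemma ddl i : i <= M -> dd i = i. Proof. rewrite /dd; lia. Qed.
Lemma ddr i : M <= i -> i <= L -> dd i = L - i. Proof. rewrite /dd; lia. Qed.
Lemma ddM : dd M = M. Proof. by apply: ddl. Qed.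
Lemma dd_le i : dd i <= M. Proof. rewrite /dd; lia. Qed.
Lemma dd0 i : i <= L -> (dd i == 0) = (i == 0) || (i == L).
Proof. rewrite /dd => h; apply/idP/idP; lia. Qed.
Lemma dd_ltM i : i <= L -> i != M -> dd i < M.
Proof. rewrite /dd => h1 h2; lia. Qed.

Lemma nbt_int i r : 0 < i -> i < L -> i != M ->
  nbt i r = tx (dd i).-1 r + tx (dd i).+1 r.
Proof.
move=> h0 hL hM; rewrite /nbt /txr h0 hL /=.
have [c|c] := ltnP i M.
  have e0 : dd i = i by apply: ddl; lia.
  have e1 : dd i.-1 = i.-1 by apply: ddl; lia.
  have e2 : dd i.+1 = i.+1 by apply: ddl; lia.
  by rewrite e0 e1 e2.
have e0 : dd i = L - i by apply: ddr; lia.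
have e1 : dd i.-1 = (L - i).+1 by rewrite (ddr (i := i.-1)); lia.
have e2 : dd i.+1 = (L - i).-1 by rewrite (ddr (i := i.+1)); lia.
by rewrite e0 e1 e2 addnC.
Qed.

Lemma nbt_mid r : nbt M r = tx M.-1 r + tx M.-1 r.
Proof.
rewrite /nbt /txr /=.
have e1 : dd M.-1 = M.-1 by apply: ddl; lia.
have e2 : dd M.+1 = M.-1 by rewrite (ddr (i := M.+1)); lia.
have -> : M < L by lia.
by rewrite e1 e2.
Qed.

Lemma nbt_end i r : i <= L -> dd i = 0 -> nbt i r = tx 1 r.
Proof.
move=> hL /eqP; rewrite dd0 // => /orP[]/eqP ->; rewrite /nbt /txr.
  have e : dd 1 = 1 by apply: ddl; lia.
  by rewrite /= e ?addn0.
have e : dd L.-1 = 1 by rewrite (ddr (i := L.-1)); lia.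
have -> : (0 < L) = true by lia.
by rewrite ltnn e andFb addn0.
Qed.

Lemma isMsg_hg i r : isMsg (hg i r) = ~~ txr i r && (nbt i r == 1).
Proof. by rewrite /hg; case: (txr i r) => //=; rewrite /hcount; case: (nbt i r) => [|[|]]. Qed.
Lemma isNoise_hg i r : isNoise (hg i r) = ~~ txr i r && (1 < nbt i r).
Proof. by rewrite /hg; case: (txr i r) => //=; rewrite /hcount; case: (nbt i r) => [|[|]]. Qed.

Lemma msg_int i r : i <= L -> 0 < dd i ->
  isMsg (hg i r) = (dd i < M) && ((r == (dd i).+1) || ((r == (dd i).+3) && ((dd i).+1 < M))).
Proof.
move=> hL hd; rewrite isMsg_hg /txr.
have [e|ne] := eqVneq i M.
  subst i; rewrite nbt_mid ddM ltnn /=; apply/negP; lia.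
have hi0 : 0 < i by move: hd; rewrite /dd; lia.
have hiL : i < L by move: hd; rewrite /dd; lia.
rewrite nbt_int //; have := dd_ltM hL ne; move: hd; move: (dd i) => d hd hdM.
rewrite /tx; apply/idP/idP; lia.
Qed.

Lemma msg_end i r : i <= L -> dd i = 0 ->
  isMsg (hg i r) = (r == 1) || ((r == 3) && (1 < M)).
Proof.
move=> hL hd; rewrite isMsg_hg /txr nbt_end // hd /tx; apply/idP/idP; lia.
Qed.

Lemma noise_hg i r : i <= L -> isNoise (hg i r) = (i == M) && (r == M.+1).
Proof.
move=> hL; rewrite isNoise_hg /txr.
have [e|ne] := eqVneq i M.
  subst i; rewrite nbt_mid ddM /tx; apply/idP/idP; lia.
have [hd|hd] := posnP (dd i).
  rewrite nbt_end // hd /tx; apply/idP/idP; lia.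
have hi0 : 0 < i by move: hd; rewrite /dd; lia.
have hiL : i < L by move: hd; rewrite /dd; lia.
rewrite nbt_int //; have := dd_ltM hL ne; move: hd; move: (dd i) => d hd hdM.
rewrite /tx; apply/idP/idP; lia.
Qed.

Lemma txr_le i r : txr i r -> r <= M.+1.
Proof. rewrite /txr /tx; have := dd_le i; move: (dd i) => d hd; lia. Qed.

Lemma txr0 i : txr i 0 = false.
Proof. by rewrite /txr /tx !andbF. Qed.
Lemma nbt0 i : nbt i 0 = 0.
Proof. by rewrite /nbt !txr0 !andbF. Qed.
Lemma end1 i : i <= L -> dd i = 0 -> txr i 1 = false /\ nbt i 1 = 1.
Proof. by move=> hL hd; rewrite /txr hd nbt_end. Qed.

Lemma has_iotaP (p : pred nat) c : reflect (exists2 k, k < c & p k) (has p (iota 0 c)).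
Proof.
apply: (iffP hasP) => [[k]|[k hk pk]].
  by rewrite mem_iota => hk pk; exists k => //; lia.
by exists k => //; rewrite mem_iota; lia.
Qed.

Lemma first_msg i c : i <= L -> 1 < c ->
  (isMsg (hg i (c.-1 + wk i)) && ~~ has (fun k => isMsg (hg i (k + wk i))) (iota 0 c.-1))
  = (dd i < M) && (0 < dd i) && (c == (dd i).+2).
Proof.
move=> hL hc.
have [hd|hd] := posnP (dd i).
  rewrite hd andbF andFb; apply: negbTE; rewrite negb_and negbK; apply/orP; right.
  apply/has_iotaP; exists 0; first lia.
  by rewrite /wk hd /= msg_end.
rewrite /wk; have -> : (dd i == 0) = false by lia.
rewrite /= addn0 msg_int // andbT.
apply/idP/idP.
  move=> /andP[/andP[hM h1] h2]; rewrite hM /=.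
  case/orP: h1 => [/eqP e|/andP[/eqP e h3]]; first lia.
  exfalso; move/negP: h2; apply; apply/has_iotaP; exists (dd i).+1; first lia.
  by rewrite addn0 msg_int // hM eqxx.
move=> /andP[hM /eqP e]; rewrite e; apply/andP; split.
  by rewrite hM eqxx.
apply/negP => /has_iotaP [k hk]; rewrite ?addn0 msg_int // hM /=; lia.
Qed.

Lemma Ad_hist i c : i <= L -> 0 < c -> c < TT ->
  Ad (hist i c) = if txr i (c + wk i) then Transmit 0 else Listen.
Proof.
move=> hL hc hT.
rewrite /Ad /hist size_mkseq leqNgt hT /= nth_mkseq; last lia.
rewrite /mkseq -map_take take_iota has_map.
have -> : minn c.-1 c = c.-1 by lia.
case: (eqVneq c 1) => [e|ne].
  subst c; rewrite /= /txr /wk; have := dd_le i; move: (dd i) => d hd.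
  by rewrite /tx; case: ifP => //; lia.
rewrite /= (first_msg (c := c)) //; last lia.
have := dd_le i; rewrite /txr /wk; move: (dd i) => d hd.
rewrite /tx; case: ifP; case: ifP => //; lia.
Qed.

Lemma tx_cs i r : i <= L ->
  (if cs i r is Active h then (if Ad h is Transmit x then Some x else None) else None)
  = if txr i r then Some 0 else None.
Proof.
move=> hL; rewrite /cs.
case: (leqP r (wk i)) => h1.
  case: r h1 => [|[|r]] h1; first by rewrite txr0.
    have hd : dd i = 0 by move: h1; rewrite /wk; case: (dd i).
    by rewrite (end1 hL hd).1.
  by move: h1; rewrite /wk; case: (dd i == 0).
case: (leqP (r - wk i) TT) => h2.
  case: (ltnP (r - wk i) TT) => h3.
    rewrite Ad_hist //; last lia.
    by rewrite subnK //; [case: (txr i r) | lia].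
  rewrite /Ad /hist size_mkseq h3.
  case E: (txr i r) => //; have := txr_le E; move: h3; rewrite /TT /wk; lia.
case E: (txr i r) => //; have := txr_le E; move: h2; rewrite /TT /wk; lia.
Qed.
End Sim.

Lemma ocomb_hc (a b : bool) :
  ocomb (if a then Some 0 else None) (if b then Some 0 else None) = hcount (a + b).
Proof. by case: a; case: b. Qed.

Section Sim2.
Variable m : nat.
Local Notation M := (Mid m).
Local Notation L := (Mid m + Mid m).

Lemma heard_sim r : (forall u : 'I_(Nn m), state (pathcfg m) (Ad m) r u = cs m u r) ->
  forall i : 'I_(Nn m), heard (G := pathcfg m) (Ad m) (state (pathcfg m) (Ad m) r) i = hcount (nbt m i r).
Proof.
move=> H i.
have Ht : forall u : 'I_(Nn m), transmits (G := pathcfg m) (Ad m) (state (pathcfg m) (Ad m) r) u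
    = if txr m u r then Some 0 else None.
  move=> u; rewrite /transmits H; apply: tx_cs; have := ltn_ord u; lia.
rewrite heard_path !Ht /nbt.
have -> : (if 0 < i then (if txr m (prevo i) r then Some 0 else None) else None)
   = if (0 < i) && txr m i.-1 r then Some 0 else None by rewrite prevoE; case: (0 < i).
have -> : (if i < L then (if txr m (nexto i) r then Some 0 else None) else None)
   = if (i < L) && txr m i.+1 r then Some 0 else None.
  by case: ifP => h //; rewrite nextoE.
exact: ocomb_hc.
Qed.

Lemma sim r : forall i : 'I_(Nn m), state (pathcfg m) (Ad m) r i = cs m i r.
Proof.
elim: r => [|r IH] i; first by rewrite /cs leq0n.
change (step (pathcfg m) (Ad m) r (state (pathcfg m) (Ad m) r) i = cs m i r.+1).
have hH := heard_sim IH i.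
have hL : (i : nat) <= L by have := ltn_ord i; lia.
have ht : ctag (c := pathcfg m) i = wk m i by rewrite /= /ptag /wk dd0.
rewrite /step IH hH ht /cs.
case: (leqP r (wk m i)) => h1 /=.
  have [hd|hd] := posnP (dd m i).
    have hw : wk m i = 1 by rewrite /wk hd.
    rewrite hw in h1 *.
    case: r h1 {IH hH} => [|[|r]] h1; last by exfalso; lia.
      by rewrite nbt0.
    have [t1 n1] := end1 hL hd.
    by rewrite n1 /= /hist /mkseq /= hw /hg t1 n1.
  have hw : wk m i = 0 by rewrite /wk; lia.
  rewrite hw in h1 *.
  case: r h1 {IH hH} => [|r] h1; last by exfalso; lia.
  by rewrite nbt0 /= /hist /mkseq /= hw /hg txr0 nbt0.
have -> : (r.+1 <= wk m i) = false by lia.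
case: (leqP (r - wk m i) (TT m)) => h2.
  case: (ltnP (r - wk m i) (TT m)) => h3.
    rewrite Ad_hist //; last lia.
    have hc : r - wk m i + wk m i = r by rewrite subnK //; lia.
    have -> : (r.+1 - wk m i <= TT m) = true by lia.
    have -> : r.+1 - wk m i = (r - wk m i).+1 by lia.
    rewrite /hist mkseqS hc /hg.
    by case: (txr m i r).
  have -> : Ad m (hist m i (r - wk m i)) = Terminate by rewrite /Ad /hist size_mkseq h3.
  have -> : (r.+1 - wk m i <= TT m) = false by lia.
  have -> : r - wk m i = TT m by lia.
  by [].
have -> : (r.+1 - wk m i <= TT m) = false by lia.
by [].
Qed.

Lemma feas : elects (pathcfg m) (Ad m) dec.
Proof.
exists (TT m).+2; split.
  move=> v; rewrite sim /cs.
  have -> : ((TT m).+2 <= wk m v) = false by rewrite /wk; lia.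
  by have -> : ((TT m).+2 - wk m v <= TT m) = false by rewrite /wk; lia.
have Mlt : M < Nn m by lia.
apply/eqP/cards1P; exists (Ordinal Mlt); apply/setP => v.
have hv : (v : nat) < Nn m := ltn_ord v.
rewrite !inE sim /cs.
have -> : ((TT m).+2 <= wk m v) = false by rewrite /wk; lia.
have -> : ((TT m).+2 - wk m v <= TT m) = false by rewrite /wk; lia.
have hh : forall h, hist_of (Halted h) = h by [].
have -> : (v == Ordinal Mlt) = (v == M :> nat) by rewrite -val_eqE.
rewrite hh /dec /hist /mkseq has_map.
apply/idP/idP.
  move/has_iotaP => [k hk]; rewrite /= noise_hg; last exact: ltn_ord v.
  by move/andP => [].
move/eqP=> e; apply/has_iotaP; exists M.+1; first by rewrite /TT; lia.
rewrite /= noise_hg; last exact: ltn_ord v.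
have e' : @nat_of_ord (Nn m) v = M := e.
by rewrite /wk e' ddM /= addn0 !eqxx.
Qed.
End Sim2.

Theorem proposition2 :
  exists C : config -> Prop,
    (* the class is infinite (contains configurations of unbounded size) *)
    (forall N : nat, exists G, C G /\ N <= csize G) /\
    (* all its members are feasible with span 1 *)
    (forall G, C G -> feasible G /\ span G = 1) /\
    (* Omega(n) lower bound: time >= n / k for a fixed k > 0 *)
    (exists k : nat, 0 < k /\
       forall G, C G -> forall (A : drip) (d : decision), elects G A d ->
         forall R, all_halted G A R -> csize G <= k * R).
Proof.
exists (fun G => exists m, G = pathcfg m); split; [|split].
- move=> n; exists (pathcfg n); split; first by exists n.
  rewrite /=; lia.
- move=> G [m ->]; split; first by exists (Ad m), dec; exact: feas.
  rewrite /span; apply/eqP; rewrite eqn_leq; apply/andP; split.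
    apply/bigmax_leqP => v _; rewrite /= /ptag; by case: (_ || _).
  have := @leq_bigmax _ (fun v : 'I_(csize (pathcfg m)) => ctag v) ord0.
  by rewrite /= /ptag eqxx.
- exists 5; split => //.
  move=> G [m ->] A d He R HR; exact: lower_bound He R HR.
Qed.
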